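(* Let $\mathbf{m}=\{1,\dots,m\}$ for $m=2,3,4,5$. Suppose given: for each $m\in\{2,3,4,5\}$ a category $\mathcal{C}_{\mathbf m}$ with a functor $\otimes_{\mathbf m}:\mathcal{C}_{\mathbf m}\times\mathcal{C}_{\mathbf m}\to\mathcal{C}_{\mathbf m}$ and an associativity constraint $\alpha_{\mathbf m}$; and for each order-preserving injection $\lambda:\mathbf l\to\mathbf m$ with $l<m$, $m\in\{3,4,5\}$, a faithful functor $F_\lambda:\mathcal{C}_{\mathbf l}\to\mathcal{C}_{\mathbf m}$ that strictly respects the operations and associativity constraints (i.e. $F_\lambda(A\otimes B)=F_\lambda A\otimes F_\lambda B$, similarly on morphisms, and $F_\lambda(\alpha_{\mathbf l})=\alpha_{\mathbf m}$), such that $F_{\tau\circ\sigma}=F_\tau\circ F_\sigma$ whenever defined. For $1\le i<j\le m$ write $F_{ji}$ for $F_\lambda$ with $\lambda:\mathbf 2\to\mathbf m$, $\lambda(1)=i,\lambda(2)=j$. Let $P\in\mathcal{C}_{\mathbf 2}$ with an isomorphism $\theta:F_{32}(P)\otimes_{\mathbf 3}F_{21}(P)\to F_{31}(P)$ in $\mathcal{C}_{\mathbf 3}$; in any $\mathcal{C}_{\mathbf m}$ write $P_{ji}=F_{ji}(P)$ and $\theta_{kji}:P_{kj}\otimes P_{ji}\to P_{ki}$ ($i<j<k$) for the image of $\theta$ under the functor induced by the embedding $\mathbf 3\to\mathbf m$ with image $\{i,j,k\}$. Let $C$ be the automorphism of $P_{41}$ in $\mathcal{C}_{\mathbf 4}$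 defined by $$C=\theta_{431}\circ(\mathrm{id}_{P_{43}}\otimes\theta_{321})\circ\alpha_{\mathbf 4}\circ(\theta_{432}\otimes\mathrm{id}_{P_{21}})^{-1}\circ\theta_{421}^{-1}.$$ For a $4$-element subset $S=\{a<b<c<d\}\subseteq\mathbf 5$ let $C_S$ be the image of $C$ in $\mathcal{C}_{\mathbf 5}$ under the functor of the embedding $\mathbf 4\to\mathbf 5$ with image $S$ (an automorphism of $P_{da}$). Assume the analogue of the hypothesis of the idempotent theorem: the five automorphisms of $P_{51}$ $$C_{\{1,2,3,5\}},\; C_{\{1,2,4,5\}},\; C_{\{1,3,4,5\}},\; \theta_{521}\circ(C_{\{2,3,4,5\}}\otimes\mathrm{id}_{P_{21}})\circ\theta_{521}^{-1},\; \theta_{541}\circ(\mathrm{id}_{P_{54}}\otimes C_{\{1,2,3,4\}})\circ\theta_{541}^{-1}$$ all coincide. Then $C=\mathrm{id}_{P_{41}}$.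
   Context: An associativity constraint for a functor $\otimes$ on a category is a natural isomorphism $\alpha_{A,B,C}:(A\otimes B)\otimes C\to A\otimes(B\otimes C)$ satisfying the pentagon axiom $(\mathrm{id}_A\otimes\alpha_{B,C,D})\circ\alpha_{A,B\otimes C,D}\circ(\alpha_{A,B,C}\otimes\mathrm{id}_D)=\alpha_{A,B,C\otimes D}\circ\alpha_{A\otimes B,C,D}$. The pair $(P,\theta)$ is called an $F_\bullet$-idempotent, and $\theta$ is called compatible with $\alpha_\bullet$ if $C=\mathrm{id}$. *)

(* Defs.v *)
From mathcomp Require Import all_boot.
Set Implicit Arguments. Unset Strict Implicit. Unset Printing Implicit Defensive.

(* Categories, presented by objects, morphisms, domain/codomain, identities *)
(* and a composition [mcomp g f] (= g o f) that is only constrained on       *)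
(* composable pairs (cod f = dom g).  Equality of morphisms is Leibniz.     *)
Record Cat := MkCat {
  Ob : Type;
  Mor : Type;
  dom : Mor -> Ob;
  cod : Mor -> Ob;
  idm : Ob -> Mor;
  mcomp : Mor -> Mor -> Mor;
  dom_idm : forall A, dom (idm A) = A;
  cod_idm : forall A, cod (idm A) = A;
  dom_comp : forall f g, cod f = dom g -> dom (mcomp g f) = dom f;
  cod_comp : forall f g, cod f = dom g -> cod (mcomp g f) = cod g;
  comp_idl : forall f, mcomp (idm (cod f)) f = f;
  comp_idr : forall f, mcomp f (idm (dom f)) = f;
  mcompA : forall f g h, cod f = dom g -> cod g = dom h ->
    mcomp h (mcomp g f) = mcomp (mcomp h g) f
}.
Arguments dom {C} f : rename.
Arguments cod {C} f : rename.
Arguments idm {C} A : rename.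
Arguments mcomp {C} g f : rename.

Record AssocCat := MkAssocCat {
  acat :> Cat;
  tob : Ob acat -> Ob acat -> Ob acat;
  tmor : Mor acat -> Mor acat -> Mor acat;
  dom_tmor : forall f g, dom (tmor f g) = tob (dom f) (dom g);
  cod_tmor : forall f g, cod (tmor f g) = tob (cod f) (cod g);
  tmor_id : forall A B, tmor (idm A) (idm B) = idm (tob A B);
  tmor_comp : forall f g f' g', cod f = dom g -> cod f' = dom g' ->
    tmor (mcomp g f) (mcomp g' f') = mcomp (tmor g g') (tmor f f');
  alpha : Ob acat -> Ob acat -> Ob acat -> Mor acat;
  dom_alpha : forall A B C, dom (alpha A B C) = tob (tob A B) C;
  cod_alpha : forall A B C, cod (alpha A B C) = tob A (tob B C);
  alpha_iso : forall A B C, exists a' : Mor acat,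
    [/\ dom a' = tob A (tob B C), cod a' = tob (tob A B) C,
        mcomp a' (alpha A B C) = idm (tob (tob A B) C)
      & mcomp (alpha A B C) a' = idm (tob A (tob B C))];
  alpha_nat : forall f g h,
    mcomp (alpha (cod f) (cod g) (cod h)) (tmor (tmor f g) h)
    = mcomp (tmor f (tmor g h)) (alpha (dom f) (dom g) (dom h));
  pentagon : forall A B C D,
    mcomp (tmor (idm A) (alpha B C D))
         (mcomp (alpha A (tob B C) D) (tmor (alpha A B C) (idm D)))
    = mcomp (alpha A B (tob C D)) (alpha (tob A B) C D)
}.
Arguments tob {a} A B : rename.
Arguments tmor {a} f g : rename.
Arguments alpha {a} A B C : rename.

Definition is_functor (C D : Cat) (fo : Ob C -> Ob D) (fm : Mor C -> Mor D) :=
  [/\ forall f, dom (fm f) = fo (dom f),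
      forall f, cod (fm f) = fo (cod f),
      forall A, fm (idm A) = idm (fo A)
    & forall f g, cod f = dom g -> fm (mcomp g f) = mcomp (fm g) (fm f)].

Definition faithful (C D : Cat) (fm : Mor C -> Mor D) :=
  forall f g, dom f = dom g -> cod f = cod g -> fm f = fm g -> f = g.

Definition strict_assoc (C D : AssocCat) (fo : Ob C -> Ob D) (fm : Mor C -> Mor D) :=
  [/\ forall A B, fo (tob A B) = tob (fo A) (fo B),
      forall f g, fm (tmor f g) = tmor (fm f) (fm g)
    & forall A B E, fm (alpha A B E) = alpha (fo A) (fo B) (fo E)].

Definition incr (l m : nat) (lam : {ffun 'I_l -> 'I_m}) :=
  forall i j : 'I_l, i < j -> lam i < lam j.

Definition compf (l m n : nat) (t : {ffun 'I_m -> 'I_n}) (s : {ffun 'I_l -> 'I_m})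
  : {ffun 'I_l -> 'I_n} := [ffun x => t (s x)].

(* The map k |-> s_k from {1..l} to {1..m}, given by the 1-based list s.
   Ordinals are 0-based, so position k (0-based) goes to s_(k+1) - 1.
   (m.-1.+1 reduces to m for every concrete m >= 1.) *)
Definition emb (m l : nat) (s : seq nat) : {ffun 'I_l -> 'I_m.-1.+1} :=
  [ffun k : 'I_l => inord (nth 0 s k).-1].

Section Objects.
Variables (C : nat -> AssocCat)
  (Fo : forall l m, {ffun 'I_l -> 'I_m} -> Ob (C l) -> Ob (C m))
  (Fm : forall l m, {ffun 'I_l -> 'I_m} -> Mor (C l) -> Mor (C m))
  (P : Ob (C 2)) (th th' : Mor (C 3)).

Definition Pji (m i j : nat) : Ob (C m.-1.+1) := Fo (emb m 2 [:: i; j]) P.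
Definition thk (m i j k : nat) : Mor (C m.-1.+1) := Fm (emb m 3 [:: i; j; k]) th.
Definition thk' (m i j k : nat) : Mor (C m.-1.+1) := Fm (emb m 3 [:: i; j; k]) th'.

Definition Cmor : Mor (C 4) :=
  mcomp (thk 4 1 3 4)
  (mcomp (tmor (idm (Pji 4 3 4)) (thk 4 1 2 3))
  (mcomp (alpha (Pji 4 3 4) (Pji 4 2 3) (Pji 4 1 2))
  (mcomp (tmor (thk' 4 2 3 4) (idm (Pji 4 1 2)))
        (thk' 4 1 2 4)))).

Definition CS (S : seq nat) : Mor (C 5) := Fm (emb 5 4 S) Cmor.
End Objects.

(* Main.v *)
Require Import Defs.
From mathcomp Require Import all_boot zify.
From Stdlib Require Import ProofIrrelevance.
Set Implicit Arguments. Unset Strict Implicit. Unset Printing Implicit Defensive.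

Record hom (A : AssocCat) (X Y : Ob A) := Hom { hm : Mor A; hd : dom hm = X; hc : cod hm = Y }.
Arguments Hom {A X Y} hm hd hc.

Lemma hom_eq (A : AssocCat) X Y (f g : @hom A X Y) : hm f = hm g -> f = g.
Proof. case: f g => f1 f2 f3 [g1 g2 g3] /= E; subst; f_equal; apply: proof_irrelevance. Qed.

Lemma hlink (A : AssocCat) X Y Z (f : @hom A X Y) (g : hom Y Z) : cod (hm f) = dom (hm g).
Proof. by rewrite hc hd. Qed.

Definition tc (A : AssocCat) X Y Z (g : @hom A Y Z) (f : hom X Y) : hom X Z :=
  Hom (mcomp (hm g) (hm f)) (etrans (dom_comp (hlink f g)) (hd f))
      (etrans (cod_comp (hlink f g)) (hc g)).

Definition tid (A : AssocCat) (X : Ob A) : hom X X := Hom (idm X) (dom_idm X) (cod_idm X).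

Definition tt (A : AssocCat) X Y X' Y' (f : @hom A X Y) (g : hom X' Y') :
  hom (tob X X') (tob Y Y').
refine (Hom (tmor (hm f) (hm g)) _ _).
- by rewrite dom_tmor !hd.
- by rewrite cod_tmor !hc.
Defined.

Definition ta (A : AssocCat) (X Y Z : Ob A) : hom (tob (tob X Y) Z) (tob X (tob Y Z)) :=
  Hom (alpha X Y Z) (dom_alpha X Y Z) (cod_alpha X Y Z).

Lemma tcA (A : AssocCat) X Y Z W (f : @hom A X Y) (g : hom Y Z) (h : hom Z W) :
  tc h (tc g f) = tc (tc h g) f.
Proof. apply: hom_eq => /=; apply: mcompA; exact: hlink. Qed.

Lemma tc1l (A : AssocCat) X Y (f : @hom A X Y) : tc (tid Y) f = f.
Proof. apply: hom_eq => /=; have := comp_idl (hm f); by rewrite hc. Qed.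

Lemma tc1r (A : AssocCat) X Y (f : @hom A X Y) : tc f (tid X) = f.
Proof. apply: hom_eq => /=; have := comp_idr (hm f); by rewrite hd. Qed.

Lemma tt_id (A : AssocCat) (X Y : Ob A) : tt (tid X) (tid Y) = tid (tob X Y).
Proof. apply: hom_eq => /=; exact: tmor_id. Qed.

Lemma tt_comp (A : AssocCat) X Y Z X' Y' Z' (f : @hom A X Y) (g : hom Y Z)
  (f' : hom X' Y') (g' : hom Y' Z') :
  tt (tc g f) (tc g' f') = tc (tt g g') (tt f f').
Proof. apply: hom_eq => /=; apply: tmor_comp; exact: hlink. Qed.

Lemma ta_nat (A : AssocCat) X1 X2 X3 Y1 Y2 Y3 (f : @hom A X1 Y1) (g : hom X2 Y2)
  (h : hom X3 Y3) :
  tc (ta Y1 Y2 Y3) (tt (tt f g) h) = tc (tt f (tt g h)) (ta X1 X2 X3).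
Proof.
apply: hom_eq => /=; move: (alpha_nat (hm f) (hm g) (hm h)).
by rewrite !hc !hd.
Qed.

Lemma tpenta (A : AssocCat) (X Y Z W : Ob A) :
  tc (tt (tid X) (ta Y Z W)) (tc (ta X (tob Y Z) W) (tt (ta X Y Z) (tid W)))
  = tc (ta X Y (tob Z W)) (ta (tob X Y) Z W).
Proof. apply: hom_eq => /=; exact: pentagon. Qed.

Definition tiso (A : AssocCat) X Y (f : @hom A X Y) :=
  exists g : hom Y X, tc g f = tid X /\ tc f g = tid Y.

Lemma tiso_ta (A : AssocCat) (X Y Z : Ob A) : tiso (ta X Y Z).
Proof.
have [a' [d c e1 e2]] := alpha_iso X Y Z.
exists (Hom a' d c); split; apply: hom_eq => //=.
Qed.

Lemma tiso_tc (A : AssocCat) X Y Z (f : @hom A X Y) (g : hom Y Z) :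
  tiso f -> tiso g -> tiso (tc g f).
Proof.
move=> [f' [f1 f2]] [g' [g1 g2]]; exists (tc f' g'); split.
- by rewrite tcA -(tcA g g' f') g1 tc1r f1.
- by rewrite tcA -(tcA f' f g) f2 tc1r g2.
Qed.

Lemma tiso_tt (A : AssocCat) X Y X' Y' (f : @hom A X Y) (g : hom X' Y') :
  tiso f -> tiso g -> tiso (tt f g).
Proof.
move=> [f' [f1 f2]] [g' [g1 g2]]; exists (tt f' g'); split.
- by rewrite -tt_comp f1 g1 tt_id.
- by rewrite -tt_comp f2 g2 tt_id.
Qed.

Lemma tiso_tid (A : AssocCat) (X : Ob A) : tiso (tid X).
Proof. by exists (tid X); rewrite tc1l. Qed.

Lemma tcK (A : AssocCat) X Y Z (g : @hom A Y X) (f : hom X Y) (x : hom Z X) :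
  tc g f = tid X -> tc g (tc f x) = x.
Proof. by move=> E; rewrite tcA E tc1l. Qed.

Lemma tt_compl (A : AssocCat) X Y Z W (f : @hom A X Y) (g : hom Y Z) :
  tt (tc g f) (tid W) = tc (tt g (tid W)) (tt f (tid W)).
Proof. by rewrite -tt_comp tc1l. Qed.

Lemma tt_compr (A : AssocCat) X Y Z W (f : @hom A X Y) (g : hom Y Z) :
  tt (tid W) (tc g f) = tc (tt (tid W) g) (tt (tid W) f).
Proof. by rewrite -tt_comp tc1l. Qed.

Lemma tt_split (A : AssocCat) X Y X' Y' (f : @hom A X Y) (g : hom X' Y') :
  tt f g = tc (tt f (tid Y')) (tt (tid X) g).
Proof. by rewrite -tt_comp tc1l tc1r. Qed.

Lemma tiso_tcK (A : AssocCat) X Y (x : @hom A X X) (z : hom Y X) :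
  tiso z -> tc x z = z -> x = tid X.
Proof.
move=> [z' [_ e2]] E; rewrite -(tc1r x) -e2 tcA E //.
Qed.


Definition valid (k j i : nat) := (0 < i) && (i < j) && (j < k) && (k <= 5).

Definition Cx (A : AssocCat) (p : nat -> nat -> Ob A) (V : nat -> nat -> nat -> bool)
  (t : forall k j i, V k j i -> hom (tob (p k j) (p j i)) (p k i))
  (u : forall k j i, V k j i -> hom (p k i) (tob (p k j) (p j i)))
  d c b a (h1 : V d c a) (h2 : V c b a) (h3 : V d c b) (h4 : V d b a)
  : hom (p d a) (p d a) :=
  tc (t _ _ _ h1) (tc (tt (tid (p d c)) (t _ _ _ h2))
    (tc (ta (p d c) (p c b) (p b a)) (tc (tt (u _ _ _ h3) (tid (p b a))) (u _ _ _ h4)))).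

Lemma CxL (A : AssocCat) (p : nat -> nat -> Ob A) (V : nat -> nat -> nat -> bool)
  (t : forall k j i, V k j i -> hom (tob (p k j) (p j i)) (p k i))
  (u : forall k j i, V k j i -> hom (p k i) (tob (p k j) (p j i)))
  (Hut : forall k j i (h : V k j i), tc (u _ _ _ h) (t _ _ _ h) = tid _)
  d c b a h1 h2 h3 h4 :
  tc (Cx t u h1 h2 h3 h4) (tc (t _ _ _ h4) (tt (t _ _ _ h3) (tid (p b a))))
  = tc (t _ _ _ h1) (tc (tt (tid (p d c)) (t _ _ _ h2)) (ta (p d c) (p c b) (p b a))).
Proof.
by rewrite /Cx -!tcA tcK // -tt_comp Hut tc1l tt_id tc1r.
Qed.

Lemma penta_main (A : AssocCat) (p : nat -> nat -> Ob A)
  (t : forall k j i, valid k j i -> hom (tob (p k j) (p j i)) (p k i))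
  (u : forall k j i, valid k j i -> hom (p k i) (tob (p k j) (p j i)))
  (Hut : forall k j i (h : valid k j i), tc (u _ _ _ h) (t _ _ _ h) = tid _)
  (Htu : forall k j i (h : valid k j i), tc (t _ _ _ h) (u _ _ _ h) = tid _) :
  let D1 := tc (t 5 2 1 isT) (tc (tt (Cx t u (d:=5) (c:=4) (b:=3) (a:=2) isT isT isT isT) (tid (p 2 1))) (u 5 2 1 isT)) in
  let D2 := Cx t u (d:=5) (c:=4) (b:=2) (a:=1) isT isT isT isT in
  let D3 := tc (t 5 4 1 isT) (tc (tt (tid (p 5 4)) (Cx t u (d:=4) (c:=3) (b:=2) (a:=1) isT isT isT isT)) (u 5 4 1 isT)) in
  let D4 := Cx t u (d:=5) (c:=3) (b:=2) (a:=1) isT isT isT isT in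
  let D5 := Cx t u (d:=5) (c:=4) (b:=3) (a:=1) isT isT isT isT in
  D4 = D2 -> D2 = D5 -> D5 = D1 -> D1 = D3 -> D4 = tid (p 5 1).
Proof.
move=> D1 D2 D3 D4 D5 E42 E25 E51 E13.
pose phi1 := tc (t 5 2 1 isT) (tt (tc (t 5 3 2 isT) (tt (t 5 4 3 isT) (tid (p 3 2)))) (tid (p 2 1))).
pose phi2 := tc (t 5 2 1 isT) (tt (tc (t 5 4 2 isT) (tt (tid (p 5 4)) (t 4 3 2 isT))) (tid (p 2 1))).
pose phi3 := tc (t 5 4 1 isT) (tt (tid (p 5 4)) (tc (t 4 2 1 isT) (tt (t 4 3 2 isT) (tid (p 2 1))))).
pose phi4 := tc (t 5 4 1 isT) (tt (tid (p 5 4)) (tc (t 4 3 1 isT) (tt (tid (p 4 3)) (t 3 2 1 isT)))).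
pose phi5 := tc (t 5 3 1 isT) (tt (t 5 4 3 isT) (t 3 2 1 isT)).
have I1 : tc D1 phi1 = tc phi2 (tt (ta (p 5 4) (p 4 3) (p 3 2)) (tid (p 2 1))).
  rewrite /D1 /phi1 -!tcA tcK // -tt_comp tc1l CxL //.
  by rewrite /phi2 -tt_comp tc1l -!tcA.
have I2 : tc D2 phi2 = tc phi3 (ta (p 5 4) (tob (p 4 3) (p 3 2)) (p 2 1)).
  rewrite /phi2 tt_compl /D2 !tcA -(tcA _ (t 5 2 1 isT)) CxL //.
  rewrite -!tcA ta_nat (tcA (ta _ _ _)) -tt_comp tc1l.
  by rewrite /phi3 -?tcA.
have I3 : tc D3 phi3 = tc phi4 (tt (tid (p 5 4)) (ta (p 4 3) (p 3 2) (p 2 1))).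
  rewrite /D3 /phi3 -!tcA tcK // -tt_comp tc1l CxL //.
  by rewrite /phi4 -tt_comp tc1l -!tcA.
have I4 : tc D4 phi1 = tc phi5 (ta (tob (p 5 4) (p 4 3)) (p 3 2) (p 2 1)).
  rewrite /phi1 tt_compl /D4 !tcA -(tcA _ (t 5 2 1 isT)) CxL //.
  rewrite -!tcA ta_nat tt_id (tcA (ta _ _ _)) -tt_comp tc1l tc1r.
  by rewrite /phi5 -?tcA.
have I5 : tc D5 phi5 = tc phi4 (ta (p 5 4) (p 4 3) (tob (p 3 2) (p 2 1))).
  rewrite /phi5 (tt_split (t 5 4 3 isT)) /D5 !tcA -(tcA _ (t 5 3 1 isT)) CxL //.
  rewrite -tt_id -!tcA ta_nat (tcA (ta _ _ _)) -tt_comp tc1l.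
  by rewrite /phi4 -?tcA.
have E1 : D1 = D4 by rewrite -E51 -E25 E42.
have E2 : D2 = D4 by rewrite E42.
have E3 : D3 = D4 by rewrite -E13 E1.
have E5 : D5 = D4 by rewrite -E25 E42.
rewrite E1 in I1; rewrite E2 in I2; rewrite E3 in I3; rewrite E5 in I5.
have tisoT : forall k j i (h : valid k j i), tiso (t _ _ _ h).
  by move=> k j i h; exists (u _ _ _ h).
apply: (@tiso_tcK _ _ _ D4 (tc phi4 (tc (ta (p 5 4) (p 4 3) (tob (p 3 2) (p 2 1)))
   (ta (tob (p 5 4) (p 4 3)) (p 3 2) (p 2 1))))).
  rewrite /phi4; repeat (apply: tiso_tc || apply: tiso_tt || apply: tiso_tid || apply: tiso_ta || apply: tisoT).
have HZ : tc D4 (tc D4 phi1) = tc phi4 (tc (ta (p 5 4) (p 4 3) (tob (p 3 2) (p 2 1)))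
   (ta (tob (p 5 4) (p 4 3)) (p 3 2) (p 2 1))).
  by rewrite I4 tcA I5 -tcA.
rewrite -{1}HZ.
rewrite I1 (tcA _ phi2 D4) I2 -(tcA _ _ phi3) (tcA _ phi3 D4) I3.
by rewrite -tcA tpenta.
Qed.


Lemma compf_emb n m l (s r : seq nat) :
  all (fun x => x <= m.+1) r -> l <= size r ->
  compf (emb n.+1 m.+1 s) (emb m.+1 l r) = emb n.+1 l [seq nth 0 s x.-1 | x <- r].
Proof.
move=> /allP Hr Hl; apply/ffunP => x; rewrite !ffunE; congr inord.
have xr : x < size r by apply: leq_trans (ltn_ord x) Hl.
rewrite (nth_map 0) // inordK //.
have := Hr _ (mem_nth 0 xr); case: (nth 0 r x) => //= y; by rewrite ltnS.
Qed.

Lemma incr_emb n l (s : seq nat) :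
  sorted ltn s -> all (fun x => 0 < x <= n.+1) s -> l <= size s -> incr (emb n.+1 l s).
Proof.
move=> so /allP Hs Hl i j ij; rewrite !ffunE.
have ir : i < size s by apply: leq_trans (ltn_ord i) Hl.
have jr : j < size s by apply: leq_trans (ltn_ord j) Hl.
have := Hs _ (mem_nth 0 ir); have := Hs _ (mem_nth 0 jr).
have := @sorted_ltn_nth _ _ ltn_trans 0 s so i j ir jr ij.
move=> ab hb ha; rewrite !inordK; move: ab hb ha; set x := nth 0 s i; set y := nth 0 s j; lia.
Qed.

Definition HFd (C : nat -> AssocCat)
  (Fo : forall l m, {ffun 'I_l -> 'I_m} -> Ob (C l) -> Ob (C m))
  (Fm : forall l m, {ffun 'I_l -> 'I_m} -> Mor (C l) -> Mor (C m)) :=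
  forall l m (lam : {ffun 'I_l -> 'I_m}),
      2 <= l -> l < m -> m <= 5 -> incr lam ->
      [/\ is_functor (Fo l m lam) (Fm l m lam),
          faithful (Fm l m lam)
        & strict_assoc (Fo l m lam) (Fm l m lam)].

Definition Hcompd (C : nat -> AssocCat)
  (Fo : forall l m, {ffun 'I_l -> 'I_m} -> Ob (C l) -> Ob (C m))
  (Fm : forall l m, {ffun 'I_l -> 'I_m} -> Mor (C l) -> Mor (C m)) :=
  forall l m n (s : {ffun 'I_l -> 'I_m}) (t : {ffun 'I_m -> 'I_n}),
      2 <= l -> l < m -> m < n -> n <= 5 -> incr s -> incr t ->
      (forall A, Fo l n (compf t s) A = Fo m n t (Fo l m s A)) /\
      (forall f, Fm l n (compf t s) f = Fm m n t (Fm l m s f)).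

Lemma thfacts (C : nat -> AssocCat)
  (Fo : forall l m, {ffun 'I_l -> 'I_m} -> Ob (C l) -> Ob (C m))
  (Fm : forall l m, {ffun 'I_l -> 'I_m} -> Mor (C l) -> Mor (C m))
  (HF : HFd Fo Fm) (Hcomp : Hcompd Fo Fm)
  (P : Ob (C 2)) (th th' : Mor (C 3))
  (Hth : dom th = tob (Pji Fo P 3 2 3) (Pji Fo P 3 1 2) /\
         cod th = Pji Fo P 3 1 3)
  (Hth' : [/\ dom th' = cod th, cod th' = dom th,
              mcomp th' th = idm (dom th)
            & mcomp th th' = idm (cod th)])
  n i j k : 3 <= n -> n < 5 -> 0 < i -> i < j -> j < k -> k <= n.+1 ->
  [/\ dom (thk Fm th n.+1 i j k) = tob (Pji Fo P n.+1 j k) (Pji Fo P n.+1 i j),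
      cod (thk Fm th n.+1 i j k) = Pji Fo P n.+1 i k,
      dom (thk' Fm th' n.+1 i j k) = Pji Fo P n.+1 i k,
      cod (thk' Fm th' n.+1 i j k) = tob (Pji Fo P n.+1 j k) (Pji Fo P n.+1 i j) &
      mcomp (thk' Fm th' n.+1 i j k) (thk Fm th n.+1 i j k)
        = idm (tob (Pji Fo P n.+1 j k) (Pji Fo P n.+1 i j)) /\
      mcomp (thk Fm th n.+1 i j k) (thk' Fm th' n.+1 i j k) = idm (Pji Fo P n.+1 i k)].
Proof.
move=> n3 n5 i0 ij jk kn.
case: Hth => Hd Hc; case: Hth' => H'd H'c HI1 HI2.
have inc : incr (emb n.+1 3 [:: i; j; k]).
  apply: incr_emb => //=; rewrite ?ij ?jk /=; lia.
have [[Fd Fc Fid Fcomp] _ [Fob Ftm Fal]] := HF 3 n.+1 _ isT n3 n5 inc.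
have E : forall a b, 0 < a -> a < b -> b <= 3 ->
   Fo 3 n.+1 (emb n.+1 3 [:: i; j; k]) (Pji Fo P 3 a b)
   = Fo 2 n.+1 (emb n.+1 2 [:: nth 0 [:: i; j; k] a.-1; nth 0 [:: i; j; k] b.-1]) P.
  move=> a b a0 ab b3.
  have inc2 : incr (emb 3 2 [:: a; b]).
    apply: incr_emb => //=; rewrite ?ab /=; lia.
  have [H1 _] := Hcomp 2 3 n.+1 _ _ isT isT n3 n5 inc2 inc.
  rewrite /Pji -H1 compf_emb //=; lia.
rewrite /thk /thk' !Fd !Fc H'd H'c Hd Hc Fob !E //.
split => //; split; rewrite -Fcomp ?HI1 ?HI2 ?Fid ?Hd ?Hc ?Fob ?E //; by rewrite ?H'd ?H'c.
Qed.


Lemma Ftc (A B : AssocCat) (fo : Ob A -> Ob B) fm (HFu : is_functor fo fm)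
  X Y Z (g : @hom A Y Z) (f : hom X Y) : fm (hm (tc g f)) = mcomp (fm (hm g)) (fm (hm f)).
Proof. case: HFu => _ _ _ Fc; apply: Fc; exact: hlink. Qed.

Section Main.
Variables (C : nat -> AssocCat)
  (Fo : forall l m, {ffun 'I_l -> 'I_m} -> Ob (C l) -> Ob (C m))
  (Fm : forall l m, {ffun 'I_l -> 'I_m} -> Mor (C l) -> Mor (C m)).
Hypotheses (HF : HFd Fo Fm) (Hcomp : Hcompd Fo Fm).
Variables (P : Ob (C 2)) (th th' : Mor (C 3)).
Hypotheses (Hth : dom th = tob (Pji Fo P 3 2 3) (Pji Fo P 3 1 2) /\
         cod th = Pji Fo P 3 1 3)
  (Hth' : [/\ dom th' = cod th, cod th' = dom th,
              mcomp th' th = idm (dom th)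
            & mcomp th th' = idm (cod th)]).

Definition validn (n : nat) (k j i : nat) := (0 < i) && (i < j) && (j < k) && (k <= n.+1).

Section N.
Variable n : nat.
Hypotheses (n3 : 3 <= n) (n5 : n < 5).

Definition pn k j : Ob (C n.+1) := Pji Fo P n.+1 j k.

Lemma thf k j i : validn n k j i ->
  [/\ dom (thk Fm th n.+1 i j k) = tob (Pji Fo P n.+1 j k) (Pji Fo P n.+1 i j),
      cod (thk Fm th n.+1 i j k) = Pji Fo P n.+1 i k,
      dom (thk' Fm th' n.+1 i j k) = Pji Fo P n.+1 i k,
      cod (thk' Fm th' n.+1 i j k) = tob (Pji Fo P n.+1 j k) (Pji Fo P n.+1 i j) &
      mcomp (thk' Fm th' n.+1 i j k) (thk Fm th n.+1 i j k)
        = idm (tob (Pji Fo P n.+1 j k) (Pji Fo P n.+1 i j)) /\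
      mcomp (thk Fm th n.+1 i j k) (thk' Fm th' n.+1 i j k) = idm (Pji Fo P n.+1 i k)].
Proof.
case/andP => /andP [] /andP [] i0 ij jk kn.
exact: (thfacts HF Hcomp Hth Hth' n3 n5 i0 ij jk kn).
Qed.

Definition tn k j i (h : validn n k j i) : hom (tob (pn k j) (pn j i)) (pn k i).
refine (Hom (thk Fm th n.+1 i j k) _ _); by case: (thf h).
Defined.

Definition un k j i (h : validn n k j i) : hom (pn k i) (tob (pn k j) (pn j i)).
refine (Hom (thk' Fm th' n.+1 i j k) _ _); by case: (thf h).
Defined.

Lemma Hutn k j i (h : validn n k j i) : tc (un h) (tn h) = tid _.
Proof. apply: hom_eq => /=; by case: (thf h) => _ _ _ _ []. Qed.

Lemma Htun k j i (h : validn n k j i) : tc (tn h) (un h) = tid _.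
Proof. apply: hom_eq => /=; by case: (thf h) => _ _ _ _ []. Qed.
End N.


Lemma Cmor_eq : Cmor Fo Fm P th th' =
  hm (Cx (tn (n:=3) isT isT) (un (n:=3) isT isT) (d:=4) (c:=3) (b:=2) (a:=1) isT isT isT isT).
Proof. by []. Qed.

Lemma CS_exp a b c d (h1 : validn 4 d c a) (h2 : validn 4 c b a) (h3 : validn 4 d c b)
  (h4 : validn 4 d b a) :
  CS Fo Fm P th th' [:: a; b; c; d] =
  hm (Cx (tn (n:=4) isT isT) (un (n:=4) isT isT) h1 h2 h3 h4).
Proof.
have : [&& 0 < a, a < b, b < c, c < d & d <= 5].
  move: (h1) (h2) (h3) (h4); rewrite /validn; lia.
case/and5P => a0 ab bc cd d5.
set S := [:: a; b; c; d].
have inc : incr (emb 5 4 S).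
  apply: incr_emb => //=; rewrite ?ab ?bc ?cd /=; lia.
have [HFu _ [Fob Ftm Fal]] := @HF 4 5 _ isT isT isT inc.
have FthE : forall i j k, 0 < i -> i < j -> j < k -> k <= 4 ->
  Fm (emb 5 4 S) (thk Fm th 4 i j k)
  = thk Fm th 5 (nth 0 S i.-1) (nth 0 S j.-1) (nth 0 S k.-1).
  move=> i j k i0 ij jk k4.
  have inc3 : incr (emb 4 3 [:: i; j; k]).
    apply: incr_emb => //=; rewrite ?ij ?jk /=; lia.
  have [_ H2] := @Hcomp 3 4 5 _ _ isT isT isT isT inc3 inc.
  rewrite /thk -H2 compf_emb //=; lia.
have FthE' : forall i j k, 0 < i -> i < j -> j < k -> k <= 4 ->
  Fm (emb 5 4 S) (thk' Fm th' 4 i j k)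
  = thk' Fm th' 5 (nth 0 S i.-1) (nth 0 S j.-1) (nth 0 S k.-1).
  move=> i j k i0 ij jk k4.
  have inc3 : incr (emb 4 3 [:: i; j; k]).
    apply: incr_emb => //=; rewrite ?ij ?jk /=; lia.
  have [_ H2] := @Hcomp 3 4 5 _ _ isT isT isT isT inc3 inc.
  rewrite /thk' -H2 compf_emb //=; lia.
have FPE : forall i j, 0 < i -> i < j -> j <= 4 ->
  Fo (emb 5 4 S) (Pji Fo P 4 i j) = Pji Fo P 5 (nth 0 S i.-1) (nth 0 S j.-1).
  move=> i j i0 ij j4.
  have inc2 : incr (emb 4 2 [:: i; j]).
    apply: incr_emb => //=; rewrite ?ij /=; lia.
  have [H1 _] := @Hcomp 2 4 5 _ _ isT isT isT isT inc2 inc.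
  rewrite /Pji -H1 compf_emb //=; lia.
rewrite /CS Cmor_eq /Cx !(Ftc HFu) /=.
case: HFu => _ _ Fid _.
rewrite !Ftm !Fid !Fal !FthE // !FthE' // !FPE //.
Qed.

Lemma final_main
  (Hfive :
     let X1 := CS Fo Fm P th th' [:: 1; 2; 3; 5] in
     let X2 := CS Fo Fm P th th' [:: 1; 2; 4; 5] in
     let X3 := CS Fo Fm P th th' [:: 1; 3; 4; 5] in
     let X4 := mcomp (thk Fm th 5 1 2 5)
                 (mcomp (tmor (CS Fo Fm P th th' [:: 2; 3; 4; 5]) (idm (Pji Fo P 5 1 2)))
                       (thk Fm th' 5 1 2 5)) in
     let X5 := mcomp (thk Fm th 5 1 4 5)
                 (mcomp (tmor (idm (Pji Fo P 5 4 5)) (CS Fo Fm P th th' [:: 1; 2; 3; 4]))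
                       (thk Fm th' 5 1 4 5)) in
     [/\ X1 = X2, X2 = X3, X3 = X4 & X4 = X5]) :
  Cmor Fo Fm P th th' = idm (Pji Fo P 4 1 4).
Proof.
move: Hfive => /=.
rewrite (CS_exp (a:=1) (b:=2) (c:=3) (d:=5) isT isT isT isT).
rewrite (CS_exp (a:=1) (b:=2) (c:=4) (d:=5) isT isT isT isT).
rewrite (CS_exp (a:=1) (b:=3) (c:=4) (d:=5) isT isT isT isT).
rewrite (CS_exp (a:=2) (b:=3) (c:=4) (d:=5) isT isT isT isT).
rewrite (CS_exp (a:=1) (b:=2) (c:=3) (d:=4) isT isT isT isT).
case=> E1 E2 E3 E4.
have := @penta_main _ (pn 4) (tn (n:=4) isT isT) (un (n:=4) isT isT)
  (@Hutn 4 isT isT) (@Htun 4 isT isT).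
move=> /= H.
have HX := H (hom_eq E1) (hom_eq E2).
have {}HX := HX ltac:(apply: hom_eq; exact: E3).
have {}HX := HX ltac:(apply: hom_eq; exact: E4).
have {}HX := f_equal (@hm _ _ _) HX.
rewrite -(CS_exp (a:=1) (b:=2) (c:=3) (d:=5) isT isT isT isT) /CS in HX.
have inc : incr (emb 5 4 [:: 1; 2; 3; 5]) by apply: incr_emb.
have [[_ _ Fid _] Ffa _] := @HF 4 5 _ isT isT isT inc.
have inc2 : incr (emb 4 2 [:: 1; 4]) by apply: incr_emb.
have [H1 _] := @Hcomp 2 4 5 _ _ isT isT isT isT inc2 inc.
apply: Ffa.
- by rewrite Cmor_eq hd dom_idm.
- by rewrite Cmor_eq hc cod_idm.
rewrite HX Fid /Pji -H1 compf_emb //.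
Qed.
End Main.


Theorem mainTheorem2
  (C : nat -> AssocCat)
  (Fo : forall l m, {ffun 'I_l -> 'I_m} -> Ob (C l) -> Ob (C m))
  (Fm : forall l m, {ffun 'I_l -> 'I_m} -> Mor (C l) -> Mor (C m))
  (HF : forall l m (lam : {ffun 'I_l -> 'I_m}),
      2 <= l -> l < m -> m <= 5 -> incr lam ->
      [/\ is_functor (Fo l m lam) (Fm l m lam),
          faithful (Fm l m lam)
        & strict_assoc (Fo l m lam) (Fm l m lam)])
  (Hcomp : forall l m n (s : {ffun 'I_l -> 'I_m}) (t : {ffun 'I_m -> 'I_n}),
      2 <= l -> l < m -> m < n -> n <= 5 -> incr s -> incr t ->
      (forall A, Fo l n (compf t s) A = Fo m n t (Fo l m s A)) /\
      (forall f, Fm l n (compf t s) f = Fm m n t (Fm l m s f)))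
  (P : Ob (C 2)) (th th' : Mor (C 3))
  (Hth : dom th = tob (Pji Fo P 3 2 3) (Pji Fo P 3 1 2) /\
         cod th = Pji Fo P 3 1 3)
  (Hth' : [/\ dom th' = cod th, cod th' = dom th,
              mcomp th' th = idm (dom th)
            & mcomp th th' = idm (cod th)])
  (Hfive :
     let X1 := CS Fo Fm P th th' [:: 1; 2; 3; 5] in
     let X2 := CS Fo Fm P th th' [:: 1; 2; 4; 5] in
     let X3 := CS Fo Fm P th th' [:: 1; 3; 4; 5] in
     let X4 := mcomp (thk Fm th 5 1 2 5)
                 (mcomp (tmor (CS Fo Fm P th th' [:: 2; 3; 4; 5]) (idm (Pji Fo P 5 1 2)))
                       (thk Fm th' 5 1 2 5)) in
     let X5 := mcomp (thk Fm th 5 1 4 5)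
                 (mcomp (tmor (idm (Pji Fo P 5 4 5)) (CS Fo Fm P th th' [:: 1; 2; 3; 4]))
                       (thk Fm th' 5 1 4 5)) in
     [/\ X1 = X2, X2 = X3, X3 = X4 & X4 = X5]) :
  Cmor Fo Fm P th th' = idm (Pji Fo P 4 1 4).
Proof.
exact: (final_main HF Hcomp Hth Hth' Hfive).
Qed.
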